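(* Let $\Gamma$ be a geometrically finite Fuchsian group such that $\infty\notin\widehat{\mathbb{R}}_{\mathrm{st}}$. Suppose $\Gamma$ is not conjugate in $\mathrm{PSL}_2(\mathbb{R})$ to any group generated by $z\mapsto -1/z$ and $z\mapsto \lambda z$ with $\lambda>1$, and suppose $\Lambda(\Gamma)$ consists of more than one point. For $g\in\Gamma\setminus\Gamma_\infty$ let $\mathscr{W}(g)\subseteq\mathbb{R}$ be the open interval whose endpoints are the two endpoints in $\mathbb{R}$ of the isometric sphere $\mathrm{I}(g)$. Then for every $g\in\Gamma\setminus\Gamma_\infty$ we have $\mathscr{W}(g)\cap\Lambda(\Gamma)\neq\varnothing$.
   Context: A Fuchsian group is a discrete subgroup of $\mathrm{PSL}_2(\mathbb{R})$ acting on the upper half-plane $\mathbb{H}$ and on $\widehat{\mathbb{R}}=\mathbb{R}\cup\{\infty\}$ by linear fractional transformations. $\Lambda(\Gamma)$ is its limit set and $\widehat{\mathbb{R}}_{\mathrm{st}}$ is $\Lambda(\Gamma)$ with all parabolic fixed points of $\Gamma$ removed. $\Gamma_\infty$ denotes the stabilizer of $\infty$ in $\Gamma$ (trivial or generated by a parabolic translation $z\mapsto z+\lambda$, under the assumption $\infty\notin\widehat{\mathbb{R}}_{\mathrm{st}}$). For $g=\begin{bmatrix}a&b\\c&d\end{bmatrix}\in\Gamma\setminus\Gamma_\infty$ (so $c\ne0$), the isometric sphere is $\mathrm{I}(g)=\{z\in\mathbb{H}: |z+\tfrac{d}{c}|=\tfrac{1}{|c|}\}$; thus $\mathscr{W}(g)=(-\tfrac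 dc-\tfrac1{|c|},\,-\tfrac dc+\tfrac1{|c|})$. *)

(* Defs.v *)
From Stdlib Require Import Reals Lra List.
Open Scope R_scope.

(* 2x2 real matrices; SL2(R) = those with det 1. A subgroup of PSL2(R) is
   represented by its full preimage in SL2(R) (a subgroup containing -I). *)
Record mat := Mat { ma : R; mb : R; mc : R; md : R }.

Definition det (g : mat) : R := ma g * md g - mb g * mc g.
Definition mul (g h : mat) : mat :=
  Mat (ma g * ma h + mb g * mc h) (ma g * mb h + mb g * md h)
      (mc g * ma h + md g * mc h) (mc g * mb h + md g * md h).
Definition inv (g : mat) : mat := Mat (md g) (- mb g) (- mc g) (ma g).
Definition Id2 : mat := Mat 1 0 0 1.
Definition negId2 : mat := Mat (-1) 0 0 (-1).
Definition neg (g : mat) : mat := Mat (- ma g) (- mb g) (- mc g) (- md g).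

Definition Fuchsian (G : mat -> Prop) : Prop :=
  (forall g, G g -> det g = 1) /\
  G Id2 /\
  (forall g h, G g -> G h -> G (mul g h)) /\
  (forall g, G g -> G (inv g)) /\
  (forall g, G g -> G (neg g)) /\
  (exists eps, 0 < eps /\ forall g, G g ->
      Rabs (ma g - 1) < eps -> Rabs (mb g) < eps ->
      Rabs (mc g) < eps -> Rabs (md g - 1) < eps -> g = Id2).

(* Points of the upper half-plane: (x, y) = x + i y with y > 0. *)
Definition inH (z : R * R) : Prop := 0 < snd z.

Definition act (g : mat) (z : R * R) : R * R :=
  let x := fst z in let y := snd z in
  let n := (mc g * x + md g)^2 + (mc g * y)^2 in
  ((ma g * mc g * (x^2 + y^2) + (ma g * md g + mb g * mc g) * x + mb g * md g) / n,
   y / n).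

(* hyperbolic distance on H: cosh d(z,w) = 1 + |z-w|^2/(2 Im z Im w) *)
Definition hcosh (z w : R * R) : R :=
  1 + ((fst z - fst w)^2 + (snd z - snd w)^2) / (2 * snd z * snd w).
Definition hdist (z w : R * R) : R :=
  let t := hcosh z w in ln (t + sqrt (t^2 - 1)).

(* Extended real line: None = infinity. *)
Definition Rhat := option R.

Definition ipt : R * R := (0, 1).

Definition limit_point (G : mat -> Prop) (x : Rhat) : Prop :=
  match x with
  | Some r => forall eps, 0 < eps -> exists g, G g /\
       (fst (act g ipt) - r)^2 + (snd (act g ipt))^2 < eps
  | None => forall M, exists g, G g /\
       (fst (act g ipt))^2 + (snd (act g ipt))^2 > M
  end.

Definition fixes (g : mat) (x : Rhat) : Prop :=
  match x with
  | Some r => mc g * r^2 + (md g - ma g) * r - mb g = 0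
  | None => mc g = 0
  end.

Definition parabolic (g : mat) : Prop :=
  (ma g + md g)^2 = 4 /\ ~ (mb g = 0 /\ mc g = 0).

Definition parabolic_fixed_point (G : mat -> Prop) (x : Rhat) : Prop :=
  exists g, G g /\ parabolic g /\ fixes g x.

Definition in_Rst (G : mat -> Prop) (x : Rhat) : Prop :=
  limit_point G x /\ ~ parabolic_fixed_point G x.

(* Geometrically finite: some Dirichlet polygon
   D_p = {z in H | forall g in G, d(z,p) <= d(z, g p)} is finite-sided,
   i.e. cut out by finitely many of its defining half-planes. *)
Definition geometrically_finite (G : mat -> Prop) : Prop :=
  exists p : R * R, inH p /\
    (forall g, G g -> act g p = p -> g = Id2 \/ g = negId2) /\
    exists L : list mat, (forall h, In h L -> G h) /\
      forall z, inH z ->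
        (forall h, In h L -> hdist z p <= hdist z (act h p)) ->
        forall g, G g -> hdist z p <= hdist z (act g p).

(* Preimage in SL2(R) of the subgroup of PSL2(R) generated by
   z |-> -1/z and z |-> lambda z. *)
Inductive gen_SD (lam : R) : mat -> Prop :=
  | gen_id : gen_SD lam Id2
  | gen_negid : gen_SD lam negId2
  | gen_S : gen_SD lam (Mat 0 (-1) 1 0)
  | gen_D : gen_SD lam (Mat (sqrt lam) 0 0 (/ sqrt lam))
  | gen_mul : forall g h, gen_SD lam g -> gen_SD lam h -> gen_SD lam (mul g h)
  | gen_inv : forall g, gen_SD lam g -> gen_SD lam (inv g).

Definition conjugate (G H : mat -> Prop) : Prop :=
  exists h, det h = 1 /\ forall m, G m <-> H (mul (mul h m) (inv h)).

(* open interval W(g) between the endpoints of the isometric sphere I(g) *)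
Definition in_W (g : mat) (x : R) : Prop :=
  - md g / mc g - 1 / Rabs (mc g) < x < - md g / mc g + 1 / Rabs (mc g).

(* Main.v *)
Require Import Defs.
From Stdlib Require Import Reals Lra Psatz List ZArith Lia Classical.
Open Scope R_scope.

Lemma mat_eq (x y : mat) : ma x = ma y -> mb x = mb y -> mc x = mc y -> md x = md y -> x = y.
Proof. destruct x, y; simpl; intros; subst; reflexivity. Qed.

Lemma sq0 (x y : R) : x^2 + y^2 = 0 -> x = 0 /\ y = 0.
Proof. intros. split; nra. Qed.

Lemma det_N (m : mat) : det m = 1 -> mc m ^2 + md m ^2 <> 0.
Proof. destruct m as [a b c d]; unfold det; simpl. intros Hm H. apply sq0 in H.
  destruct H as [H1 H2]. assert (c = 0) by lra. assert (d = 0) by lra. subst. lra. Qed.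

Lemma act_ipt (m : mat) : det m = 1 ->
  act m ipt = ((ma m * mc m + mb m * md m) / (mc m ^2 + md m ^2), 1 / (mc m ^2 + md m ^2)).
Proof. intros H. pose proof (det_N m H) as H0.
  unfold act, ipt; cbv beta zeta; cbn [fst snd].
  replace ((mc m * 0 + md m) ^ 2 + (mc m * 1) ^ 2) with (mc m ^2 + md m ^2) by ring.
  f_equal; field; auto. Qed.

Lemma det_mul (h m : mat) : det (mul h m) = det h * det m.
Proof. destruct h, m; unfold det, mul; simpl; ring. Qed.

Lemma key_id (a b c d r s : R) :
  (r * (a * c + b * d) + s * (c ^ 2 + d ^ 2)) ^ 2 + (r * (a * d - b * c)) ^ 2 =
  (c^2+d^2) * ((r * a + s * c) ^ 2 + (r * b + s * d) ^ 2).
Proof. ring. Qed.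

Lemma act_mul_i (h m : mat) : det m = 1 -> det h = 1 ->
  act (mul h m) ipt = act h (act m ipt).
Proof.
  intros Hm Hh. assert (Hhm : det (mul h m) = 1) by (rewrite det_mul, Hm, Hh; ring).
  rewrite (act_ipt _ Hhm), (act_ipt _ Hm).
  pose proof (det_N _ Hhm) as N1. pose proof (det_N _ Hm) as N2.
  destruct h as [p q r s], m as [a b c d]; unfold det, act, mul in *; cbv beta zeta; cbn [fst snd ma mb mc md] in *.
  set (N := c^2 + d^2) in *.
  replace (1 / N) with ((a*d-b*c) / N)  by (rewrite Hm; reflexivity).
  f_equal.
  - unfold N in *. field; repeat split; try rewrite key_id; try apply Rmult_integral_contrapositive_currified; auto.
  - unfold N in *. rewrite <- Hm at 1. field; repeat split; try rewrite key_id; try apply Rmult_integral_contrapositive_currified; auto.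
Qed.

Lemma sq_pos (x : R) : x <> 0 -> 0 < x^2.
Proof. intros H. destruct (Rlt_or_le x 0). nra. assert (0 < x) by lra. nra. Qed.

Ltac nz := repeat split; try assumption; try (intro; nra).

Definition mob (h : mat) (r : R) : R := (ma h * r + mb h) / (mc h * r + md h).

Lemma nh_pos (h : mat) (x y : R) : det h = 1 -> 0 < y ->
  0 < (mc h * x + md h)^2 + (mc h * y)^2.
Proof. intros Hd Hy. destruct (Req_dec (mc h) 0) as [E|E].
  - assert (md h <> 0). { destruct h as [a b c d]; unfold det in Hd; cbn [ma mb mc md] in *. intro H. rewrite E, H in Hd. lra. }
    rewrite E. assert (0 < md h ^2) by (apply sq_pos; auto). pose proof (pow2_ge_0 (0 * y)); lra.
  - assert (0 < (mc h * y)^2) by (apply sq_pos; apply Rmult_integral_contrapositive_currified; [exact E | intro; lra]). pose proof (pow2_ge_0 (mc h * x + md h)); lra.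
Qed.

Lemma act_fst (h : mat) (x y : R) : fst (act h (x, y)) =
  (ma h * mc h * (x^2 + y^2) + (ma h * md h + mb h * mc h) * x + mb h * md h) /
  ((mc h * x + md h)^2 + (mc h * y)^2).
Proof. reflexivity. Qed.
Lemma act_snd (h : mat) (x y : R) : snd (act h (x, y)) = y / ((mc h * x + md h)^2 + (mc h * y)^2).
Proof. reflexivity. Qed.

Lemma dist_id (h : mat) (x y r : R) : det h = 1 -> 0 < y -> mc h * r + md h <> 0 ->
  (fst (act h (x,y)) - mob h r)^2 + snd (act h (x,y))^2 =
  ((x-r)^2+y^2) / (((mc h*x+md h)^2 + (mc h*y)^2) * (mc h*r+md h)^2).
Proof.
  intros Hd Hy Hk. pose proof (nh_pos h x y Hd Hy) as Hn.
  rewrite act_fst, act_snd. unfold mob. destruct h as [a b c d]; unfold det in Hd; cbn [ma mb mc md] in *.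
  transitivity (((a * c * (x ^ 2 + y ^ 2) + (a * d + b * c) * x + b * d) / ((c * x + d) ^ 2 + (c * y) ^ 2) -
    (a * r + b) / (c * r + d)) ^ 2 + ((a*d-b*c) * y / ((c * x + d) ^ 2 + (c * y) ^ 2)) ^ 2).
  { rewrite Hd. field. nz. }
  transitivity ((a*d-b*c)^2 * ((x - r) ^ 2 + y ^ 2) / (((c * x + d) ^ 2 + (c * y) ^ 2) * (c * r + d) ^ 2)).
  { field. nz. }
  rewrite Hd. field. nz.
Qed.

Lemma norm_id (h : mat) (x y : R) : det h = 1 -> 0 < y ->
  fst (act h (x,y))^2 + snd (act h (x,y))^2 =
  ((ma h * x + mb h)^2 + (ma h * y)^2) / ((mc h*x+md h)^2 + (mc h*y)^2).
Proof.
  intros Hd Hy. pose proof (nh_pos h x y Hd Hy) as Hn.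
  rewrite act_fst, act_snd. destruct h as [a b c d]; unfold det in Hd; cbn [ma mb mc md] in *.
  transitivity (((a * c * (x ^ 2 + y ^ 2) + (a * d + b * c) * x + b * d) / ((c * x + d) ^ 2 + (c * y) ^ 2)) ^ 2
    + ((a*d-b*c) * y / ((c * x + d) ^ 2 + (c * y) ^ 2)) ^ 2).
  { rewrite Hd. field. nz. }
  field. nz.
Qed.

Lemma center_id (h : mat) (x y : R) : det h = 1 -> 0 < y -> mc h <> 0 ->
  (fst (act h (x,y)) - ma h / mc h)^2 + snd (act h (x,y))^2 =
  1 / (mc h ^2 * ((mc h*x+md h)^2 + (mc h*y)^2)).
Proof.
  intros Hd Hy Hc. pose proof (nh_pos h x y Hd Hy) as Hn.
  rewrite act_fst, act_snd. destruct h as [a b c d]; unfold det in Hd; cbn [ma mb mc md] in *.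
  transitivity (((a * c * (x ^ 2 + y ^ 2) + (a * d + b * c) * x + b * d) / ((c * x + d) ^ 2 + (c * y) ^ 2) - a / c) ^ 2
    + ((a*d-b*c) * y / ((c * x + d) ^ 2 + (c * y) ^ 2)) ^ 2).
  { rewrite Hd. field. nz. }
  transitivity ((a*d-b*c)^2 / (c ^2 * ((c*x+d)^2 + (c*y)^2))).
  { field. nz. }
  rewrite Hd. field. nz.
Qed.

Lemma div_lt (a b e : R) : 0 < b -> a < e * b -> a / b < e.
Proof. intros Hb H. apply (Rmult_lt_reg_r b); auto. unfold Rdiv. rewrite Rmult_assoc, Rinv_l; lra. Qed.

Lemma lt_div_mul (a b c : R) : 0 < b -> a < c / b -> a * b < c.
Proof. intros Hb H. apply (Rmult_lt_compat_r b) in H; auto. unfold Rdiv in H.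
  rewrite Rmult_assoc, Rinv_l in H; lra. Qed.

Lemma div_lt_mul (a b c : R) : 0 < b -> c / b < a -> c < a * b.
Proof. intros Hb H. apply (Rmult_lt_compat_r b) in H; auto. unfold Rdiv in H.
  rewrite Rmult_assoc, Rinv_l in H; lra. Qed.

Lemma act_ipt_Y (m : mat) : det m = 1 -> 0 < snd (act m ipt).
Proof. intros H. rewrite act_ipt by auto. cbn [snd]. pose proof (det_N m H).
  assert (0 < mc m ^2 + md m^2) by (pose proof (pow2_ge_0 (mc m)); pose proof (pow2_ge_0 (md m)); lra).
  unfold Rdiv. rewrite Rmult_1_l. apply Rinv_0_lt_compat; auto. Qed.

Lemma lower_n (c K u Y : R) : c^2 * (u^2 + Y^2) <= K^2/4 ->
  K^2/4 <= (c*u + K)^2 + (c*Y)^2.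
Proof. intros H. assert ((c*u+K)^2 + (c*u)^2 - K^2/2 = (2*c*u+K)^2/2) by field.
  pose proof (pow2_ge_0 (2*c*u+K)). pose proof (pow2_ge_0 (c*Y)). nra. Qed.

Section Lim.
Variable G : mat -> Prop.
Hypothesis Gdet : forall g, G g -> det g = 1.
Hypothesis Gmul : forall g h, G g -> G h -> G (mul g h).

Lemma lp_fin (h : mat) (r : R) : limit_point G (Some r) -> G h -> mc h * r + md h <> 0 ->
  limit_point G (Some (mob h r)).
Proof.
  intros Hl Hh Hk eps He. cbn [limit_point] in Hl.
  set (K := mc h * r + md h) in *. set (c := mc h) in *.
  assert (HK : 0 < K^2) by (apply sq_pos; auto).
  assert (Hc : 0 <= c^2) by apply pow2_ge_0.
  destruct (Hl (Rmin (eps * (K^2)^2/4) (K^2/(4*(c^2+1))))) as [m [Hm Hd]].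
  { apply Rmin_pos. apply Rmult_lt_0_compat; [apply Rmult_lt_0_compat; [lra|nra]|lra].
    apply Rmult_lt_0_compat; [lra|]. apply Rinv_0_lt_compat; lra. }
  exists (mul h m). split; [apply Gmul; auto|].
  rewrite act_mul_i by auto.
  pose proof (act_ipt_Y m (Gdet m Hm)) as HY.
  destruct (act m ipt) as [X Y]. cbn [fst snd] in *.
  rewrite dist_id by auto.
  set (d := (X - r)^2 + Y^2) in *.
  assert (H1 : d < eps * (K^2)^2/4) by (eapply Rlt_le_trans; [exact Hd| apply Rmin_l]).
  assert (H2 : d < K^2/(4*(c^2+1))) by (eapply Rlt_le_trans; [exact Hd| apply Rmin_r]).
  assert (H3 : d * (4*(c^2+1)) < K^2).
  { apply (Rmult_lt_compat_r (4*(c^2+1))) in H2; [|lra]. unfold Rdiv in H2.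
    rewrite Rmult_assoc, Rinv_l in H2; lra. }
  assert (Hn : K^2/4 <= (c*X + md h)^2 + (c*Y)^2).
  { replace (c*X + md h) with (c*(X-r) + K) by (unfold K, c; ring). apply lower_n.
    unfold d in H3. nra. }
  change (mc h) with c; change (c * r + md h) with K. apply div_lt. { apply Rmult_lt_0_compat; lra. }
  assert (d >= 0) by (unfold d; pose proof (pow2_ge_0 (X-r)); pose proof (pow2_ge_0 Y); lra).
  nra.
Qed.

Lemma lp_inf (h : mat) (r : R) : limit_point G (Some r) -> G h -> mc h * r + md h = 0 ->
  limit_point G None.
Proof.
  intros Hl Hh Hk M. cbn [limit_point] in Hl.
  pose proof (Gdet h Hh) as Hdh.
  set (B := ma h * r + mb h).
  assert (HB : mc h * B = -1).
  { unfold B. unfold det in Hdh. replace (mc h * (ma h * r + mb h)) with (ma h * (mc h * r + md h) - (ma h * md h - mb h * mc h)) by ring.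
    rewrite Hk, Hdh. ring. }
  assert (HB2 : 0 < B^2) by (apply sq_pos; intro E; rewrite E in HB; lra).
  assert (Hc2 : 0 < mc h ^2) by (apply sq_pos; intro E; rewrite E in HB; lra).
  set (M' := Rabs M + 1).
  assert (HM' : 0 < M') by (unfold M'; pose proof (Rabs_pos M); lra).
  assert (Ha : 0 <= ma h ^2) by apply pow2_ge_0.
  destruct (Hl (Rmin (B^2/(4*(ma h^2+1))) (B^2/(4*mc h^2*M')))) as [m [Hm Hd]].
  { apply Rmin_pos; apply Rmult_lt_0_compat; try lra; apply Rinv_0_lt_compat; nra. }
  exists (mul h m). split; [apply Gmul; auto|].
  rewrite act_mul_i by auto.
  pose proof (act_ipt_Y m (Gdet m Hm)) as HY.
  destruct (act m ipt) as [X Y]. cbn [fst snd] in *.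
  rewrite norm_id by auto.
  set (d := (X - r)^2 + Y^2) in *.
  assert (H1 : d < B^2/(4*(ma h^2+1))) by (eapply Rlt_le_trans; [exact Hd| apply Rmin_l]).
  assert (H2 : d < B^2/(4*mc h^2*M')) by (eapply Rlt_le_trans; [exact Hd| apply Rmin_r]).
  assert (H3 : d * (4*(ma h^2+1)) < B^2).
  { apply lt_div_mul; auto; lra. }
  assert (H4 : d * (4*mc h^2*M') < B^2).
  { apply lt_div_mul; auto; nra. }
  assert (Hnum : B^2/4 <= (ma h * X + mb h)^2 + (ma h * Y)^2).
  { replace (ma h * X + mb h) with (ma h*(X-r) + B) by (unfold B; ring). apply lower_n.
    unfold d in H3. nra. }
  assert (Hn : (mc h * X + md h)^2 + (mc h * Y)^2 = mc h^2 * d).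
  { unfold d. replace (mc h * X + md h) with (mc h * (X - r) + (mc h * r + md h)) by ring. rewrite Hk. ring. }
  rewrite Hn.
  assert (Hd0 : 0 < d) by (unfold d; pose proof (pow2_ge_0 (X-r)); assert (0 < Y^2) by nra; lra).
  apply Rlt_gt. apply Rlt_le_trans with M'. { unfold M'. pose proof (Rle_abs M). lra. }
  assert (M' * (mc h ^2 * d) < (ma h * X + mb h)^2 + (ma h * Y)^2) by nra.
  apply Rlt_le. apply (Rmult_lt_reg_r (mc h^2 * d)). nra.
  unfold Rdiv. rewrite Rmult_assoc, Rinv_l. lra. nra.
Qed.

Lemma lp_center (g : mat) : (forall g, G g -> G (inv g)) -> limit_point G None -> G g -> mc g <> 0 ->
  limit_point G (Some (- md g / mc g)).
Proof.
  intros Ginv Hl Hg Hc eps He. cbn [limit_point] in Hl.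
  pose proof (Ginv g Hg) as Hig. pose proof (Gdet _ Hig) as Hdi.
  assert (Hc2 : 0 < mc g ^2) by (apply sq_pos; auto).
  set (T := 1/(mc g^2 * eps)).
  assert (HT : 0 < T) by (unfold T; unfold Rdiv; rewrite Rmult_1_l; apply Rinv_0_lt_compat; nra).
  destruct (Hl (2 * (T + ma g^2 + 1) / mc g^2)) as [m [Hm Hd]].
  exists (mul (inv g) m). split; [apply Gmul; auto|].
  rewrite act_mul_i by auto.
  pose proof (act_ipt_Y m (Gdet m Hm)) as HY.
  destruct (act m ipt) as [X Y]. cbn [fst snd] in *.
  replace (- md g / mc g) with (ma (inv g) / mc (inv g)) by (destruct g; unfold inv; cbn; field; auto).
  rewrite center_id by (auto; destruct g; unfold inv; cbn in *; intro; apply Hc; lra).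
  replace (mc (inv g)) with (- mc g) by (destruct g; reflexivity).
  replace (md (inv g)) with (ma g) by (destruct g; reflexivity).
  assert (Hb : 2 * (T + ma g^2 + 1) < mc g^2 * (X^2+Y^2)).
  { apply Rgt_lt in Hd. apply div_lt_mul in Hd; auto. nra. }
  assert (Hn : T < (- mc g * X + ma g)^2 + (- mc g * Y)^2).
  { assert ((- mc g * X + ma g)^2 + (ma g)^2 - (mc g * X)^2/2 = (- mc g * X + 2 * ma g)^2/2) by field.
    pose proof (pow2_ge_0 (- mc g * X + 2 * ma g)). nra. }
  replace ((- mc g)^2) with (mc g ^2) by ring.
  unfold T in Hn.
  set (n := (- mc g * X + ma g)^2 + (- mc g * Y)^2) in *.
  assert (0 < n) by (assert (0 < 1/(mc g^2*eps)) by (fold T; lra); lra).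
  apply div_lt. nra.
  assert (1 / (mc g ^ 2 * eps) * (mc g^2 * eps) = 1) by (field; split; lra).
  assert (0 < mc g^2 * eps) by nra.
  assert (1 / (mc g ^ 2 * eps) * (mc g^2 * eps) < n * (mc g^2 * eps)) by (apply Rmult_lt_compat_r; auto).
  nra.
Qed.
End Lim.

Lemma nat_large (x : R) : exists n : nat, x < INR n.
Proof.
  destruct (archimed x) as [H1 _]. destruct (Z_lt_le_dec (up x) 0) as [L|L].
  - exists 0%nat. simpl. apply IZR_lt in L. lra.
  - exists (Z.to_nat (up x)). rewrite INR_IZR_INZ, Z2Nat.id by lia. lra.
Qed.

Lemma bernoulli (s : R) (n : nat) : 0 <= s -> 1 + INR n * s <= (1 + s)^n.
Proof. intros Hs. induction n. simpl. lra. rewrite S_INR. simpl.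
  assert (0 <= INR n) by apply pos_INR. nra. Qed.

Section ZSeq.
Variable t : R.
Variable u : Z -> R.
Hypothesis Hrec : forall k, u (k+1)%Z = t * u k - u (k-1)%Z.
Hypothesis Hmon : forall k, u k ^2 <= u (k+1)%Z ^2.

Definition Cst := u 1%Z * u (-1)%Z - u 0%Z ^2.

Definition Dc (k : Z) := u (k+1)%Z * u (k-1)%Z - u k ^2.

Lemma cassini_step (k : Z) : Dc (k+1) = Dc k.
Proof. unfold Dc. replace (k+1+1)%Z with ((k+1)+1)%Z by ring. rewrite (Hrec (k+1)).
  replace (k+1-1)%Z with k by ring. rewrite (Hrec k). ring. Qed.

Lemma cassini (k : Z) : Dc k = Cst.
Proof.
  assert (Dc 0 = Cst) by (unfold Dc, Cst; reflexivity).
  rewrite <- H. induction k using Z.peano_ind.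
  - reflexivity.
  - rewrite <- Z.add_1_r, cassini_step. auto.
  - rewrite <- IHk. replace k with (Z.pred k + 1)%Z at 2 by lia. rewrite cassini_step. reflexivity.
Qed.

Lemma wrec (k : Z) : u (k+1)%Z ^2 + u (k-1)%Z^2 = (t^2-2) * u k ^2 - 2 * Cst.
Proof. rewrite <- (cassini k). unfold Dc. rewrite (Hrec k). ring. Qed.

Lemma mono_nat (n : nat) (k : Z) : u k ^2 <= u (k + Z.of_nat n)%Z ^2.
Proof. induction n. replace (k + Z.of_nat 0)%Z with k by lia. lra.
  eapply Rle_trans. apply IHn. replace (k + Z.of_nat (S n))%Z with ((k + Z.of_nat n) + 1)%Z by lia. apply Hmon. Qed.

Lemma mono_nat' (n : nat) (k : Z) : u (k - Z.of_nat n)%Z ^2 <= u k ^2.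
Proof. pose proof (mono_nat n (k - Z.of_nat n)). replace (k - Z.of_nat n + Z.of_nat n)%Z with k in H by lia. auto. Qed.

Definition dl (k : Z) := u (k+1)%Z ^2 - u k ^2.
Definition el (k : Z) := (t^2-4) * u k ^2 - 2 * Cst.

Lemma dl_pos k : 0 <= dl k.
Proof. unfold dl. pose proof (Hmon k). lra. Qed.

Lemma dl_step k : dl k = dl (k-1)%Z + el k.
Proof. unfold dl, el. replace (k-1+1)%Z with k by ring. pose proof (wrec k). lra. Qed.

Lemma key_le4 : t^2 <= 4 -> el 0 = 0.
Proof.
  intros Ht.
  assert (Fw : forall n : nat, dl (Z.of_nat n) <= dl 0 + INR n * el 0).
  { induction n. simpl. lra.
    rewrite Nat2Z.inj_succ, S_INR. rewrite (dl_step (Z.succ (Z.of_nat n))).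
    replace (Z.succ (Z.of_nat n) - 1)%Z with (Z.of_nat n) by lia.
    assert (el (Z.succ (Z.of_nat n)) <= el 0).
    { unfold el. pose proof (mono_nat (S n) 0) as H. replace (0 + Z.of_nat (S n))%Z with (Z.succ (Z.of_nat n)) in H by lia. nra. }
    lra. }
  assert (Bw : forall n : nat, dl (- Z.of_nat n) <= dl 0 - INR n * el 0).
  { induction n. simpl. lra.
    rewrite S_INR. pose proof (dl_step (- Z.of_nat n)).
    replace (- Z.of_nat n - 1)%Z with (- Z.of_nat (S n))%Z in H by lia.
    assert (el 0 <= el (- Z.of_nat n)).
    { unfold el. pose proof (mono_nat' n 0). replace (0 - Z.of_nat n)%Z with (- Z.of_nat n)%Z in H0 by lia. nra. }
    lra. }
  destruct (Rtotal_order (el 0) 0) as [L|[E|L]]; auto.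
  - destruct (nat_large (dl 0 / (- el 0))) as [n Hn].
    pose proof (Fw n). pose proof (dl_pos (Z.of_nat n)).
    apply div_lt_mul in Hn; [|lra]. lra.
  - destruct (nat_large (dl 0 / el 0)) as [n Hn].
    pose proof (Bw n). pose proof (dl_pos (- Z.of_nat n)).
    apply div_lt_mul in Hn; [|lra]. lra.
Qed.

Lemma rho_exists : 4 < t^2 -> exists rho, rho^2 - t*rho + 1 = 0 /\ rho^2 < 1.
Proof.
  intros Ht. set (D := sqrt (t^2-4)).
  assert (HD : D^2 = t^2-4) by (unfold D; rewrite <- Rsqr_pow2, Rsqr_sqrt; lra).
  assert (HD0 : 0 <= D) by apply sqrt_pos.
  destruct (Rlt_or_le 0 t) as [Tp|Tn].
  - exists ((t - D)/2). split. field_simplify. nra. 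
    assert (2 < t) by nra. assert (D < t) by nra. assert (t - 2 < D) by nra. nra.
  - exists ((t + D)/2). split. field_simplify. nra.
    assert (t < -2) by nra. assert (D < -t) by nra. assert (-t - 2 < D) by nra. nra.
Qed.

Definition zs (rho : R) (n : nat) := u (- Z.of_nat n - 1)%Z - rho * u (- Z.of_nat n)%Z.

Lemma key_gt4 : 4 < t^2 -> Cst = 0.
Proof.
  intros Ht. destruct rho_exists as [rho [Hr1 Hr2]]; auto.
  set (sg := t - rho).
  assert (Hs : sg * rho = 1) by (unfold sg; nra).
  assert (Hs2 : 1 < sg^2) by nra.
  assert (Zst : forall n, zs rho (S n) = sg * zs rho n).
  { intros n. unfold zs. pose proof (Hrec (- Z.of_nat n - 1)) as H.
    replace (- Z.of_nat n - 1 + 1)%Z with (- Z.of_nat n)%Z in H by lia.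
    replace (- Z.of_nat (S n))%Z with (- Z.of_nat n - 1)%Z by lia.
    replace (- Z.of_nat n - 1 - 1)%Z with (- Z.of_nat n - 1 - 1)%Z in H by lia.
    assert (E : u (- Z.of_nat n - 1 - 1)%Z = t * u (- Z.of_nat n - 1)%Z - u (- Z.of_nat n)%Z) by lra.
    rewrite E. replace (sg * (u (- Z.of_nat n - 1)%Z - rho * u (- Z.of_nat n)%Z)) with
      (sg * u (- Z.of_nat n - 1)%Z - (sg * rho) * u (- Z.of_nat n)%Z) by ring. rewrite Hs. unfold sg. ring. }
  assert (Zpow : forall n, zs rho n ^2 = (sg^2)^n * zs rho 0 ^2).
  { induction n. simpl. ring. rewrite Zst. transitivity (sg^2 * zs rho n ^2). ring. rewrite IHn. simpl. ring. }
  assert (Zb : forall n, zs rho n ^2 <= 4 * u 0%Z ^2).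
  { intros n. unfold zs. pose proof (mono_nat' (S n) 0). pose proof (mono_nat' n 0).
    replace (0 - Z.of_nat (S n))%Z with (- Z.of_nat n - 1)%Z in H by lia.
    replace (0 - Z.of_nat n)%Z with (- Z.of_nat n)%Z in H0 by lia.
    set (A := u (- Z.of_nat n - 1)%Z) in *. set (B := u (- Z.of_nat n)%Z) in *.
    assert ((A - rho * B)^2 <= 2 * (A^2 + rho^2 * B^2)) by (pose proof (pow2_ge_0 (A + rho*B)); nra).
    assert (rho^2 * B^2 <= B^2) by (pose proof (pow2_ge_0 B); nra). lra. }
  assert (Z0 : zs rho 0 = 0).
  { destruct (Req_dec (zs rho 0) 0) as [E|E]; auto. exfalso.
    assert (Hz : 0 < zs rho 0 ^2) by (apply sq_pos; auto).
    destruct (nat_large (4 * u 0%Z ^2 / (zs rho 0 ^2 * (sg^2-1)))) as [n Hn].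
    apply div_lt_mul in Hn; [|nra].
    pose proof (bernoulli (sg^2 - 1) n ltac:(lra)). replace (1 + (sg^2-1)) with (sg^2) in H by ring.
    pose proof (Zb n). rewrite Zpow in H0. nra. }
  unfold zs in Z0. simpl in Z0. unfold Cst.
  pose proof (Hrec 0). simpl in H.
  assert (u (-1)%Z = rho * u 0%Z) by lra. rewrite H, H0. nra.
Qed.

End ZSeq.

Lemma ell_all (t : R) (u : Z -> R) (Hrec : forall k, u (k+1)%Z = t * u k - u (k-1)%Z)
  (Hmon : forall k, u k ^2 <= u (k+1)%Z ^2) : t^2 < 4 ->
  u 1%Z ^2 = u 0%Z ^2 /\ u (-1)%Z ^2 = u 0%Z ^2.
Proof.
  intros Ht.
  pose proof (key_le4 t u Hrec Hmon ltac:(lra)) as H0. unfold el in H0.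
  set (u1 := fun k => u (k+1)%Z).
  assert (R1 : forall k, u1 (k+1)%Z = t * u1 k - u1 (k-1)%Z).
  { intros k. unfold u1. replace (k+1+1)%Z with ((k+1)+1)%Z by lia. rewrite Hrec. f_equal. f_equal. lia. }
  assert (M1 : forall k, u1 k ^2 <= u1 (k+1)%Z ^2) by (intros k; apply Hmon).
  pose proof (key_le4 t u1 R1 M1 ltac:(lra)) as H1. unfold el in H1.
  assert (C1 : Cst u1 = Cst u) by (rewrite <- (cassini t u Hrec 1); unfold Cst, Dc, u1; reflexivity).
  set (u2 := fun k => u (k-1)%Z).
  assert (R2 : forall k, u2 (k+1)%Z = t * u2 k - u2 (k-1)%Z).
  { intros k. unfold u2. replace (k+1-1)%Z with ((k-1)+1)%Z by lia. rewrite Hrec. replace (k+1-1)%Z with (k-1+1)%Z by lia. reflexivity. }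
  assert (M2 : forall k, u2 k ^2 <= u2 (k+1)%Z ^2).
  { intros k. unfold u2. replace (k+1-1)%Z with ((k-1)+1)%Z by lia. apply Hmon. }
  pose proof (key_le4 t u2 R2 M2 ltac:(lra)) as H2. unfold el in H2.
  assert (C2 : Cst u2 = Cst u) by (rewrite <- (cassini t u Hrec (-1)); unfold Cst, Dc, u2; reflexivity).
  rewrite C1 in H1. rewrite C2 in H2. unfold u1 in H1. unfold u2 in H2. simpl in H1, H2.
  split.
  - assert ((t^2-4) * (u 1%Z ^2 - u 0%Z ^2) = 0) by lra.
    apply Rmult_integral in H. destruct H; lra.
  - assert ((t^2-4) * (u (-1)%Z ^2 - u 0%Z ^2) = 0) by lra.
    apply Rmult_integral in H. destruct H; lra.
Qed.

Section Orbit.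
Variable g : mat.
Hypothesis Hdg : det g = 1.
Variable P : R -> Prop.
Hypothesis HPout : forall r, P r -> 1 <= (mc g * r + md g)^2.
Hypothesis HPf : forall r, P r -> P (mob g r).
Hypothesis HPb : forall r, P r -> P (mob (inv g) r).
Hypothesis HPb0 : forall r, P r -> ma g - mc g * r <> 0.
Variable z : R.
Hypothesis Hz : P z.

Let tr := ma g + md g.

Fixpoint zf (n : nat) : R := match n with O => z | S n => mob g (zf n) end.
Fixpoint zb (n : nat) : R := match n with O => z | S n => mob (inv g) (zb n) end.
Fixpoint vf (n : nat) : R := match n with O => 1 | S n => vf n * (mc g * zf n + md g) end.
Fixpoint sb (n : nat) : R := match n with O => 1 | S n => sb n * (ma g - mc g * zb n) end.

Lemma zf_P n : P (zf n). Proof. induction n; simpl; auto. Qed.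
Lemma zb_P n : P (zb n). Proof. induction n; simpl; auto. Qed.

Lemma fwd_id (w : R) : mc g * w + md g <> 0 -> mc g * mob g w + md g = tr - 1 / (mc g * w + md g).
Proof. intros H. unfold mob, tr. destruct g as [a b c d]; unfold det in Hdg; cbn in *.
  rewrite <- Hdg. field. auto. Qed.

Lemma bwd_id (w : R) : ma g - mc g * w <> 0 -> ma g - mc g * mob (inv g) w = tr - 1 / (ma g - mc g * w).
Proof. intros H. unfold mob, tr. destruct g as [a b c d]; unfold det in Hdg; cbn in *.
  replace (- c * w + a) with (a - c * w) by ring.
  rewrite <- Hdg. field. auto. Qed.

Lemma bwd_id2 (w : R) : ma g - mc g * w <> 0 -> (mc g * mob (inv g) w + md g) * (ma g - mc g * w) = 1.
Proof. intros H. unfold mob. destruct g as [a b c d]; unfold det in Hdg; cbn in *.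
  replace (- c * w + a) with (a - c * w) by ring.
  rewrite <- Hdg. field. auto. Qed.

Lemma nz1 (x : R) : 1 <= x^2 -> x <> 0.
Proof. intros H E. rewrite E in H. lra. Qed.

Lemma vf_rec n : vf (S (S n)) = tr * vf (S n) - vf n.
Proof. change (vf (S (S n))) with (vf (S n) * (mc g * mob g (zf n) + md g)).
  pose proof (nz1 _ (HPout _ (zf_P n))) as H.
  rewrite fwd_id by auto. simpl. field. auto. Qed.

Lemma sb_rec n : sb (S (S n)) = tr * sb (S n) - sb n.
Proof. change (sb (S (S n))) with (sb (S n) * (ma g - mc g * mob (inv g) (zb n))).
  pose proof (HPb0 _ (zb_P n)) as H.
  rewrite bwd_id by auto. simpl. field. auto. Qed.

Lemma vf_mon n : vf n ^2 <= vf (S n) ^2.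
Proof. simpl. pose proof (HPout _ (zf_P n)). pose proof (pow2_ge_0 (vf n)).
  replace ((vf n * (mc g * zf n + md g))^2) with (vf n ^2 * (mc g * zf n + md g)^2) by ring. nra. Qed.

Lemma sb_mon n : sb (S n) ^2 <= sb n ^2.
Proof. simpl. pose proof (HPout _ (zb_P (S n))). simpl in H. pose proof (bwd_id2 _ (HPb0 _ (zb_P n))).
  pose proof (pow2_ge_0 (sb n)).
  set (A := mc g * mob (inv g) (zb n) + md g) in *. set (B := ma g - mc g * zb n) in *.
  replace ((sb n * B)^2) with (sb n ^2 * B^2) by ring.
  assert (B^2 <= 1). { assert (A^2 * B^2 = 1) by (replace (A^2*B^2) with ((A*B)^2) by ring; rewrite H0; ring). pose proof (pow2_ge_0 B). nra. }
  nra. Qed.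

Definition uz (k : Z) : R := if (0 <=? k)%Z then vf (Z.to_nat k) else sb (Z.to_nat (- k)).

Lemma uz_pos n : uz (Z.of_nat n) = vf n.
Proof. unfold uz. destruct (0 <=? Z.of_nat n)%Z eqn:E. rewrite Nat2Z.id. auto. apply Z.leb_gt in E. lia. Qed.

Lemma uz_neg n : uz (- Z.of_nat n) = sb n.
Proof. unfold uz. destruct (0 <=? - Z.of_nat n)%Z eqn:E.
  - apply Z.leb_le in E. assert (n = 0%nat) by lia. subst. reflexivity.
  - rewrite Z.opp_involutive, Nat2Z.id. auto. Qed.

Lemma Zcases (k : Z) : (exists n, k = Z.of_nat n) \/ (exists n, k = (- Z.of_nat (S n))%Z).
Proof. destruct (Z_le_gt_dec 0 k). left. exists (Z.to_nat k). lia. right. exists (Z.to_nat (- k) - 1)%nat. lia. Qed.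

Lemma uz_rec k : uz (k+1)%Z = tr * uz k - uz (k-1)%Z.
Proof.
  destruct (Zcases k) as [[n ->]|[n ->]].
  - destruct n.
    + simpl. change 1%Z with (Z.of_nat 1). rewrite uz_pos. change (-1)%Z with (- Z.of_nat 1)%Z.
      rewrite uz_neg. change 0%Z with (Z.of_nat 0). rewrite uz_pos. simpl.
      unfold tr. ring.
    + replace (Z.of_nat (S n) + 1)%Z with (Z.of_nat (S (S n))) by lia.
      replace (Z.of_nat (S n) - 1)%Z with (Z.of_nat n) by lia.
      rewrite !uz_pos. apply vf_rec.
  - replace (- Z.of_nat (S n) + 1)%Z with (- Z.of_nat n)%Z by lia.
    replace (- Z.of_nat (S n) - 1)%Z with (- Z.of_nat (S (S n)))%Z by lia.
    rewrite !uz_neg. rewrite sb_rec. ring.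
Qed.

Lemma uz_mon k : uz k ^2 <= uz (k+1)%Z ^2.
Proof.
  destruct (Zcases k) as [[n ->]|[n ->]].
  - replace (Z.of_nat n + 1)%Z with (Z.of_nat (S n)) by lia. rewrite !uz_pos. apply vf_mon.
  - replace (- Z.of_nat (S n) + 1)%Z with (- Z.of_nat n)%Z by lia. rewrite !uz_neg. apply sb_mon.
Qed.

Lemma Cst_uz : Cst uz = (mc g * z + md g) * (ma g - mc g * z) - 1.
Proof. unfold Cst. change 1%Z with (Z.of_nat 1). rewrite uz_pos. change (-1)%Z with (- Z.of_nat 1)%Z.
  rewrite uz_neg. change 0%Z with (Z.of_nat 0). rewrite uz_pos. simpl. ring. Qed.

Lemma orbit_hyp : 4 <= tr^2 -> (mc g * z + md g) * (ma g - mc g * z) = 1.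
Proof.
  intros Ht. destruct (Rle_lt_or_eq_dec _ _ Ht) as [L|E].
  - pose proof (key_gt4 tr uz uz_rec uz_mon L). rewrite Cst_uz in H. lra.
  - pose proof (key_le4 tr uz uz_rec uz_mon ltac:(lra)). unfold el in H. rewrite Cst_uz in H.
    rewrite <- E in H. lra.
Qed.

Lemma orbit_ell : tr^2 < 4 -> (mc g * z + md g)^2 = 1 /\ tr = 0.
Proof.
  intros Ht. destruct (ell_all tr uz uz_rec uz_mon Ht) as [H1 H2].
  pose proof (uz_rec 0). simpl in H.
  change 1%Z with (Z.of_nat 1) in H1, H. rewrite uz_pos in H1, H.
  change (-1)%Z with (- Z.of_nat 1)%Z in H2, H. rewrite uz_neg in H2, H.
  change 0%Z with (Z.of_nat 0) in H1, H2, H. rewrite uz_pos in H1, H2, H. simpl in H1, H2, H.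
  set (p := 1 * (mc g * z + md g)) in *. set (q := 1 * (ma g - mc g * z)) in *.
  assert (p^2 = 1) by lra. assert (q^2 = 1) by lra.
  split. unfold p in *. rewrite Rmult_1_l in *. auto.
  assert (tr = p + q) by lra.
  assert ((p*q)^2 = 1) by (replace ((p*q)^2) with (p^2*q^2) by ring; rewrite H0, H3; ring).
  assert (p*q = 1 \/ p*q = -1) by (assert ((p*q-1)*(p*q+1) = 0) by nra; apply Rmult_integral in H6; destruct H6; [left|right]; lra).
  destruct H6; nra.
Qed.

End Orbit.

Notation mneg := Defs.neg.
Ltac meq := apply mat_eq; cbn [ma mb mc md mul inv Id2 negId2 mneg]; ring.

Lemma mul_assoc (x y z : mat) : mul (mul x y) z = mul x (mul y z).
Proof. destruct x, y, z; unfold mul; meq. Qed.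
Lemma mul_Id_l x : mul Id2 x = x. Proof. destruct x; unfold mul, Id2; meq. Qed.
Lemma mul_Id_r x : mul x Id2 = x. Proof. destruct x; unfold mul, Id2; meq. Qed.
Lemma inv_mul x y : inv (mul x y) = mul (inv y) (inv x). Proof. destruct x, y; unfold mul, inv; meq. Qed.
Lemma inv_inv x : inv (inv x) = x. Proof. destruct x; unfold inv; meq. Qed.
Lemma mul_inv_r x : det x = 1 -> mul x (inv x) = Id2.
Proof. destruct x as [a b c d]; unfold det, mul, inv, Id2; cbn; intros H. apply mat_eq; cbn; nra. Qed.
Lemma mul_inv_l x : det x = 1 -> mul (inv x) x = Id2.
Proof. destruct x as [a b c d]; unfold det, mul, inv, Id2; cbn; intros H. apply mat_eq; cbn; nra. Qed.
Lemma det_inv x : det (inv x) = det x. Proof. destruct x; unfold det, inv; cbn; ring. Qed.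
Lemma neg_mul_l x y : mul (mneg x) y = mneg (mul x y). Proof. destruct x, y; unfold mul, mneg; meq. Qed.
Lemma neg_mul_r x y : mul x (mneg y) = mneg (mul x y). Proof. destruct x, y; unfold mul, mneg; meq. Qed.
Lemma neg_as_mul x : mneg x = mul negId2 x. Proof. destruct x; unfold mul, mneg, negId2; meq. Qed.
Lemma neg_neg x : mneg (mneg x) = x. Proof. destruct x; unfold mneg; meq. Qed.
Lemma inv_neg x : inv (mneg x) = mneg (inv x). Proof. destruct x; unfold mneg, inv; meq. Qed.

Definition conj (h x : mat) := mul (mul h x) (inv h).

Lemma conj_mul h x y : det h = 1 -> conj h (mul x y) = mul (conj h x) (conj h y).
Proof. intros H. unfold conj. rewrite !mul_assoc. f_equal. f_equal.
  rewrite <- (mul_assoc (inv h) h), mul_inv_l, mul_Id_l by auto. reflexivity. Qed.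
Lemma conj_inv h x : conj h (inv x) = inv (conj h x).
Proof. unfold conj. rewrite !inv_mul, inv_inv, mul_assoc. reflexivity. Qed.
Lemma conj_neg h x : conj h (mneg x) = mneg (conj h x).
Proof. unfold conj. rewrite neg_mul_r, neg_mul_l. reflexivity. Qed.
Lemma conj_Id h : det h = 1 -> conj h Id2 = Id2.
Proof. intros H. unfold conj. rewrite mul_Id_r. apply mul_inv_r; auto. Qed.
Lemma conj_conj h x : det h = 1 -> conj (inv h) (conj h x) = x.
Proof. intros H. unfold conj. rewrite inv_inv. rewrite !mul_assoc. rewrite mul_inv_l by auto.
  rewrite mul_Id_r. rewrite <- mul_assoc, mul_inv_l, mul_Id_l by auto. reflexivity. Qed.
Lemma conj_conj' h x : det h = 1 -> conj h (conj (inv h) x) = x.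
Proof. intros H. pose proof (conj_conj (inv h) x) as E. rewrite inv_inv in E. apply E. rewrite det_inv; auto. Qed.
Lemma det_conj h x : det h = 1 -> det (conj h x) = det x.
Proof. intros H. unfold conj. rewrite !det_mul, det_inv, H. ring. Qed.

Section Dih.
Variable G : mat -> Prop.
Hypothesis Gdet : forall g, G g -> det g = 1.
Hypothesis GId : G Id2.
Hypothesis Gmul : forall g h, G g -> G h -> G (mul g h).
Hypothesis Ginv : forall g, G g -> G (inv g).
Hypothesis Gneg : forall g, G g -> G (mneg g).
Hypothesis Gdisc : exists eps, 0 < eps /\ forall g, G g ->
      Rabs (ma g - 1) < eps -> Rabs (mb g) < eps ->
      Rabs (mc g) < eps -> Rabs (md g - 1) < eps -> g = Id2.
Variable g : mat.
Hypothesis Hg : G g.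
Hypothesis Hc : 0 < mc g.
Hypothesis Htr : ma g + md g = 0.
Definition pp := (ma g - 1) / mc g.
Definition qq := (ma g + 1) / mc g.
Hypothesis Hp : limit_point G (Some pp).
Hypothesis Hq : limit_point G (Some qq).
Hypothesis HL : forall r, limit_point G (Some r) -> r = pp \/ r = qq.
Hypothesis Hinf : ~ limit_point G None.

Definition al := sqrt (mc g / 2).
Lemma al2 : al^2 = mc g / 2.
Proof. unfold al. rewrite <- Rsqr_pow2, Rsqr_sqrt; lra. Qed.
Lemma al_pos : 0 < al.
Proof. unfold al. apply sqrt_lt_R0. lra. Qed.

Definition hh := Mat al (- al * pp) (- al) (al * qq).

Lemma qp : qq - pp = 2 / mc g.
Proof. unfold pp, qq. field. lra. Qed.

Lemma det_hh : det hh = 1.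
Proof. unfold det, hh; cbn. pose proof al2. pose proof qp.
  transitivity (al^2 * (qq - pp)). ring. rewrite H, H0. field. lra. Qed.

Lemma conj_entries (m : mat) :
  ma (conj hh m) = al^2 * (ma m * qq + mb m - pp * (mc m * qq + md m)) /\
  mb (conj hh m) = al^2 * (ma m * pp + mb m - pp * (mc m * pp + md m)) /\
  mc (conj hh m) = - al^2 * (ma m * qq + mb m - qq * (mc m * qq + md m)) /\
  md (conj hh m) = - al^2 * (ma m * pp + mb m - qq * (mc m * pp + md m)).
Proof. destruct m; unfold conj, hh, mul, inv; cbn. repeat split; ring. Qed.

Lemma pq_ne : pp <> qq.
Proof. intro E. pose proof qp. rewrite E in H. replace (qq - qq) with 0 in H by ring.
  assert (2 / mc g > 0) by (apply Rdiv_lt_0_compat; lra). lra. Qed.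

Lemma den_nz (m : mat) (r : R) : G m -> limit_point G (Some r) -> mc m * r + md m <> 0.
Proof. intros Hm Hr E. apply Hinf. eapply lp_inf; eauto. Qed.

Lemma mob_perm (m : mat) : G m ->
  (mob m pp = pp /\ mob m qq = qq) \/ (mob m pp = qq /\ mob m qq = pp).
Proof.
  intros Hm. pose proof (den_nz m pp Hm Hp) as D1. pose proof (den_nz m qq Hm Hq) as D2.
  assert (L1 : limit_point G (Some (mob m pp))) by (apply lp_fin; auto).
  assert (L2 : limit_point G (Some (mob m qq))) by (apply lp_fin; auto).
  assert (Ne : mob m pp <> mob m qq).
  { intro E. unfold mob in E. pose proof (Gdet m Hm) as Hd.
    destruct m as [a b c d]; unfold det in Hd; cbn in *.
    apply pq_ne. assert ((a * pp + b) * (c * qq + d) = (a * qq + b) * (c * pp + d)).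
    { apply (Rmult_eq_compat_r ((c * pp + d) * (c * qq + d))) in E.
      replace ((a * pp + b) / (c * pp + d) * ((c * pp + d) * (c * qq + d))) with ((a * pp + b) * (c * qq + d)) in E by (field; auto).
      rewrite E. field. auto. }
    assert ((pp - qq) * (a*d - b*c) = 0) by (rewrite <- Rminus_diag_eq with (r1 := (a * pp + b) * (c * qq + d)) (r2 := (a * qq + b) * (c * pp + d)); [ring|auto]).
    rewrite Hd in H0. lra. }
  destruct (HL _ L1) as [A|A]; destruct (HL _ L2) as [B|B].
  - exfalso. apply Ne. rewrite A, B. auto.
  - left; auto.
  - right; auto.
  - exfalso. apply Ne. rewrite A, B. auto.
Qed.

Lemma fix_eq (m : mat) (r s : R) : mc m * r + md m <> 0 -> mob m r = s ->
  ma m * r + mb m - s * (mc m * r + md m) = 0.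
Proof. intros H E. unfold mob in E. rewrite <- E. field. auto. Qed.

Lemma shape (m : mat) : G m ->
  (mb (conj hh m) = 0 /\ mc (conj hh m) = 0) \/ (ma (conj hh m) = 0 /\ md (conj hh m) = 0).
Proof.
  intros Hm. pose proof (den_nz m pp Hm Hp) as D1. pose proof (den_nz m qq Hm Hq) as D2.
  destruct (conj_entries m) as [E1 [E2 [E3 E4]]].
  rewrite E1, E2, E3, E4.
  destruct (mob_perm m Hm) as [[A B]|[A B]].
  - left. rewrite (fix_eq m pp pp D1 A), (fix_eq m qq qq D2 B). split; ring.
  - right. rewrite (fix_eq m pp qq D1 A), (fix_eq m qq pp D2 B). split; ring.
Qed.

Definition Smat := Mat 0 (-1) 1 0.

Lemma conj_g : conj hh g = Smat.
Proof.
  pose proof (Gdet g Hg) as Hd. pose proof al2 as A2. pose proof Hc as Hc'. pose proof Htr as Ht.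
  destruct (conj_entries g) as [E1 [E2 [E3 E4]]].
  apply mat_eq; rewrite ?E1, ?E2, ?E3, ?E4; unfold Smat; cbn [ma mb mc md]; rewrite A2; unfold pp, qq;
  revert Hd Hc' Ht; destruct g as [a b c d]; unfold det; cbn [ma mb mc md]; intros Hd Hc' Ht;
  assert (d = -a) by lra; subst d; assert (b = (-1 - a^2)/c) by (field_simplify_eq; [nra | intro; lra]); subst b;
  field; intro; lra.
Qed.

Definition G' (X : mat) := G (conj (inv hh) X).

Lemma G'_conj m : G' (conj hh m) <-> G m.
Proof. unfold G'. rewrite conj_conj by apply det_hh. tauto. Qed.
Lemma G'_mul X Y : G' X -> G' Y -> G' (mul X Y).
Proof. unfold G'. intros. rewrite conj_mul by (rewrite det_inv; apply det_hh). auto. Qed.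
Lemma G'_inv X : G' X -> G' (inv X).
Proof. unfold G'. intros. rewrite conj_inv. auto. Qed.
Lemma G'_neg X : G' X -> G' (mneg X).
Proof. unfold G'. intros. rewrite conj_neg. auto. Qed.
Lemma G'_Id : G' Id2.
Proof. unfold G'. rewrite conj_Id by (rewrite det_inv; apply det_hh). auto. Qed.
Lemma G'_S : G' Smat.
Proof. unfold G'. rewrite <- conj_g. rewrite conj_conj by apply det_hh. auto. Qed.
Lemma G'_det X : G' X -> det X = 1.
Proof. unfold G'. intros H. apply Gdet in H. rewrite det_conj in H by (rewrite det_inv; apply det_hh). auto. Qed.

Definition dg (r : R) := Mat r 0 0 (/ r).

Lemma conj_dg r : r <> 0 -> conj (inv hh) (dg r) =
  Mat (al^2 * (qq * r - pp / r)) (al^2 * (pp * qq) * (/ r - r)) (al^2 * (r - / r)) (al^2 * (qq / r - pp * r)).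
Proof. intros H. unfold conj, hh, dg, inv, mul. apply mat_eq; cbn; field; auto. Qed.

Lemma al2qp : al^2 * (qq - pp) = 1.
Proof. rewrite al2, qp. field. lra. Qed.

Lemma small2 (w x y u1 u2 e : R) : 0 <= u1 < e -> 0 <= u2 < e ->
  (w*(x*u1 + y*u2))^2 <= 2 * w^2 * (x^2 + y^2) * e^2.
Proof. intros H1 H2.
  assert ((x*u1+y*u2)^2 <= 2*(x^2*u1^2 + y^2*u2^2)) by (pose proof (pow2_ge_0 (x*u1-y*u2)); nra).
  assert (u1^2 <= e^2) by nra. assert (u2^2 <= e^2) by nra.
  assert (x^2*u1^2 <= x^2*e^2) by (pose proof (pow2_ge_0 x); nra).
  assert (y^2*u2^2 <= y^2*e^2) by (pose proof (pow2_ge_0 y); nra).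
  replace ((w*(x*u1+y*u2))^2) with (w^2 * (x*u1+y*u2)^2) by ring.
  pose proof (pow2_ge_0 w). nra. Qed.

Lemma abs_sq (x e : R) : 0 < e -> x^2 < e^2 -> Rabs x < e.
Proof. intros He H. unfold Rabs. destruct (Rcase_abs x); nra. Qed.

Lemma disc_dg : exists eta, 0 < eta /\ forall r, 1 < r < 1 + eta -> ~ G' (dg r).
Proof.
  destruct Gdisc as [eps [He Hd]].
  set (w := al^2). set (K := 2 * w^2 * (pp^2 + qq^2 + 2*(pp*qq)^2 + 2) + 1).
  assert (HK : 1 <= K) by (unfold K; pose proof (pow2_ge_0 w); pose proof (pow2_ge_0 pp); pose proof (pow2_ge_0 qq); pose proof (pow2_ge_0 (pp*qq)); nra).
  exists (eps / K). split. apply Rdiv_lt_0_compat; lra.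
  intros r [R1 R2] HG. unfold G' in HG. rewrite conj_dg in HG by lra.
  set (u1 := r - 1). set (u2 := 1 - / r).
  assert (U1 : 0 <= u1 < eps / K) by (unfold u1; lra).
  assert (Hr : / r < 1) by (rewrite <- Rinv_1; apply Rinv_lt_contravar; lra).
  assert (Hr0 : 0 < / r) by (apply Rinv_0_lt_compat; lra).
  assert (U2 : 0 <= u2 < eps / K).
  { unfold u2. split. lra. assert (1 - / r = (r - 1) / r) by (field; lra). rewrite H.
    assert ((r-1)/r <= r - 1). { unfold Rdiv. assert ((r-1) * /r <= (r-1) * 1) by (apply Rmult_le_compat_l; lra). lra. } lra. }
  assert (Heta : K * (eps/K)^2 <= eps^2).
  { replace (K * (eps/K)^2) with (eps^2 / K) by (field; lra). 
    apply (Rmult_le_reg_r K); [lra|]. unfold Rdiv. rewrite Rmult_assoc, Rinv_l by lra. nra. }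
  assert (Hpos : 0 < (eps/K)^2) by (apply sq_pos; apply Rgt_not_eq; apply Rdiv_lt_0_compat; lra).
  assert (BND : forall x y, 2 * w^2 * (x^2 + y^2) <= K - 1 -> (w*(x*u1 + y*u2))^2 < eps^2).
  { intros x y Hxy. pose proof (small2 w x y u1 u2 (eps/K) U1 U2). nra. }
  assert (B2 : forall x y, x^2 + y^2 <= pp^2 + qq^2 + 2*(pp*qq)^2 + 2 -> 2 * w^2 * (x^2 + y^2) <= K - 1).
  { intros x y Hxy. unfold K. pose proof (pow2_ge_0 w). nra. }
  pose proof (pow2_ge_0 pp) as P1. pose proof (pow2_ge_0 qq) as P2. pose proof (pow2_ge_0 (pp*qq)) as P3.
  assert (wqp : w * (qq - pp) = 1) by (unfold w; apply al2qp).
  specialize (Hd _ HG). cbn [ma mb mc md] in Hd. change (al^2) with w in Hd.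
  assert (E : Mat (w * (qq * r - pp / r)) (w * (pp * qq) * (/ r - r)) (w * (r - / r)) (w * (qq / r - pp * r)) = Id2).
  { apply Hd; apply abs_sq; auto.
    - replace (w * (qq * r - pp / r) - 1) with (w * (qq * u1 + pp * u2)).
      apply BND, B2. nra. rewrite <- wqp. unfold u1, u2. unfold Rdiv. ring.
    - replace (w * (pp * qq) * (/ r - r)) with (w * ((- (pp*qq)) * u1 + (- (pp*qq)) * u2)) by (unfold u1, u2; ring).
      apply BND, B2. nra.
    - replace (w * (r - / r)) with (w * (1 * u1 + 1 * u2)) by (unfold u1, u2; ring).
      apply BND, B2. nra.
    - replace (w * (qq / r - pp * r) - 1) with (w * ((- pp) * u1 + (- qq) * u2)).
      apply BND, B2. nra. rewrite <- wqp. unfold u1, u2. unfold Rdiv. ring. }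
  assert (w * (r - / r) = 0) by (apply (f_equal mc) in E; cbn in E; auto).
  assert (0 < w) by (unfold w; rewrite al2; lra).
  assert (r - / r > 0) by lra. nra.
Qed.

Lemma dg_mul r s : r <> 0 -> s <> 0 -> mul (dg r) (dg s) = dg (r*s).
Proof. intros. unfold dg, mul. apply mat_eq; cbn; field; auto. Qed.
Lemma dg_inv r : r <> 0 -> inv (dg r) = dg (/ r).
Proof. intros. unfold dg, inv. apply mat_eq; cbn; try field; auto. Qed.
Lemma dg_neg r : r <> 0 -> mneg (dg r) = dg (- r).
Proof. intros. unfold dg, Defs.neg. apply mat_eq; cbn; try field; auto. Qed.

Lemma G'_dg_inv r : r <> 0 -> G' (dg r) -> G' (dg (/ r)).
Proof. intros. rewrite <- dg_inv by auto. apply G'_inv; auto. Qed.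
Lemma G'_dg_div r s : r <> 0 -> s <> 0 -> G' (dg r) -> G' (dg s) -> G' (dg (r / s)).
Proof. intros. unfold Rdiv. rewrite <- dg_mul by (auto; apply Rinv_neq_0_compat; auto).
  apply G'_mul; auto. apply G'_dg_inv; auto. Qed.
Lemma G'_dg_abs r : r <> 0 -> G' (dg r) -> G' (dg (Rabs r)).
Proof. intros. unfold Rabs. destruct (Rcase_abs r); auto. rewrite <- dg_neg by auto. apply G'_neg; auto. Qed.

Definition Aset (r : R) := 1 < r /\ G' (dg r).

Lemma diag_pm (X : mat) : (forall r, ~ Aset r) -> G' X -> mb X = 0 -> mc X = 0 -> X = Id2 \/ X = negId2.
Proof.
  intros HA HX Hb Hc0. pose proof (G'_det X HX) as Hd.
  destruct X as [a b c d]; unfold det in Hd; cbn in *. subst b c.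
  assert (Ha : a <> 0) by (intro; subst; lra).
  assert (Hdd : d = / a) by (field_simplify_eq; [lra|auto]). subst d.
  change (G' (dg a)) in HX.
  pose proof (G'_dg_abs a Ha HX) as HX'.
  assert (Habs : 0 < Rabs a) by (apply Rabs_pos_lt; auto).
  destruct (Rtotal_order (Rabs a) 1) as [L|[E|L]].
  - exfalso. apply (HA (/ Rabs a)). split.
    + rewrite <- Rinv_1. apply Rinv_lt_contravar; lra.
    + apply G'_dg_inv; auto. lra.
  - unfold Rabs in E. destruct (Rcase_abs a).
    + right. assert (a = -1) by lra. subst. unfold negId2. apply mat_eq; cbn; field.
    + left. assert (a = 1) by lra. subst. unfold Id2. apply mat_eq; cbn; field.
  - exfalso. apply (HA (Rabs a)). split; auto.
Qed.

Lemma conj_inv_neg : conj (inv hh) negId2 = negId2.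
Proof. replace negId2 with (mneg Id2) by (unfold Id2, negId2, Defs.neg; apply mat_eq; cbn; ring).
  rewrite conj_neg, conj_Id; auto. rewrite det_inv. apply det_hh. Qed.

Lemma small_group : (forall r, ~ Aset r) -> forall m, G m -> m = Id2 \/ m = negId2 \/ m = g \/ m = mneg g.
Proof.
  intros HA m Hm.
  assert (Back : forall m, G m -> conj hh m = Id2 \/ conj hh m = negId2 -> m = Id2 \/ m = negId2).
  { intros m0 Hm0 [E|E]; [left|right]; rewrite <- (conj_conj hh m0 det_hh), E.
    - apply conj_Id. rewrite det_inv. apply det_hh.
    - apply conj_inv_neg. }
  destruct (shape m Hm) as [[B C]|[A D]].
  - destruct (Back m Hm) as [E|E]; auto. apply diag_pm; auto. apply G'_conj; auto.
  - assert (Hm' : G (mul m (inv g))) by auto.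
    assert (E : conj hh (mul m (inv g)) = mul (conj hh m) (inv Smat)).
    { rewrite conj_mul by apply det_hh. rewrite conj_inv, conj_g. reflexivity. }
    assert (DD : conj hh (mul m (inv g)) = Id2 \/ conj hh (mul m (inv g)) = negId2).
    { apply diag_pm; auto. apply G'_conj; auto.
      - rewrite E. destruct (conj hh m); cbn in *; subst. unfold mul, inv, Smat; cbn. ring.
      - rewrite E. destruct (conj hh m); cbn in *; subst. unfold mul, inv, Smat; cbn. ring. }
    assert (Em : m = mul (mul m (inv g)) g) by (rewrite mul_assoc, mul_inv_l, mul_Id_r; auto).
    destruct (Back _ Hm' DD) as [F|F]; rewrite F in Em.
    + right; right; left. rewrite Em, mul_Id_l. auto.
    + right; right; right. rewrite Em. rewrite neg_as_mul. reflexivity.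
Qed.

Lemma A_nonempty : exists r, Aset r.
Proof.
  apply NNPP. intro HN. assert (HA : forall r, ~ Aset r) by (intros r Hr; apply HN; exists r; auto).
  set (K0 := 1 + mc g ^2 + md g ^2).
  assert (HK : forall m, G m -> mc m ^2 + md m ^2 <= K0).
  { intros m Hm. unfold K0. pose proof (pow2_ge_0 (mc g)). pose proof (pow2_ge_0 (md g)).
    destruct (small_group HA m Hm) as [E|[E|[E|E]]]; subst; unfold Id2, negId2, Defs.neg; cbn; lra. }
  assert (HK0 : 1 <= K0) by (unfold K0; pose proof (pow2_ge_0 (mc g)); pose proof (pow2_ge_0 (md g)); lra).
  destruct (Hp ((1/K0)^2)) as [m [Hm Hd]].
  { apply sq_pos. apply Rgt_not_eq. apply Rdiv_lt_0_compat; lra. }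
  rewrite act_ipt in Hd by auto. cbn [fst snd] in Hd.
  pose proof (HK m Hm). pose proof (det_N m (Gdet m Hm)).
  assert (0 < mc m ^2 + md m ^2) by (pose proof (pow2_ge_0 (mc m)); pose proof (pow2_ge_0 (md m)); lra).
  assert (1 / K0 <= 1 / (mc m ^ 2 + md m ^ 2)).
  { unfold Rdiv. rewrite !Rmult_1_l. apply Rinv_le_contravar; auto. }
  assert (0 < 1/K0) by (apply Rdiv_lt_0_compat; lra).
  pose proof (pow2_ge_0 ((ma m * mc m + mb m * md m) / (mc m ^ 2 + md m ^ 2) - pp)). nra.
Qed.

Lemma A_low : exists eta, 0 < eta /\ forall r, Aset r -> 1 + eta <= r.
Proof. destruct disc_dg as [eta [He H]]. exists eta. split; auto. intros r [R1 R2].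
  destruct (Rlt_or_le r (1 + eta)); auto. exfalso. apply (H r); auto. Qed.

Lemma A_min : exists a0, Aset a0 /\ forall r, Aset r -> a0 <= r.
Proof.
  destruct A_low as [eta [He Hlow]].
  set (E := fun x => Aset (- x)).
  assert (Eb : bound E) by (exists (-1); intros x Hx; unfold E, Aset in Hx; lra).
  assert (Ene : exists x, E x) by (destruct A_nonempty as [r Hr]; exists (-r); unfold E; rewrite Ropp_involutive; auto).
  destruct (completeness E Eb Ene) as [m [Hub Hlub]].
  set (a0 := - m).
  assert (Lb : forall r, Aset r -> a0 <= r).
  { intros r Hr. assert (- r <= m) by (apply Hub; unfold E; rewrite Ropp_involutive; auto). unfold a0; lra. }
  assert (Cl : forall th, 0 < th -> exists r, Aset r /\ r < a0 + th).
  { intros th Hth. apply NNPP. intro N.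
    assert (m <= - a0 - th). { apply Hlub. intros x Hx. unfold E in Hx.
      destruct (Rlt_or_le (- x) (a0 + th)). exfalso; apply N; exists (- x); auto. lra. }
    unfold a0 in H. lra. }
  assert (Ha0 : 1 + eta <= a0).
  { destruct A_nonempty as [r0 Hr0]. apply NNPP. intro N.
    destruct (Cl (1 + eta - a0)) as [r [Hr Hr2]]. lra. pose proof (Hlow r Hr). lra. }
  exists a0. split; auto.
  destruct (Cl (a0 * eta)) as [r [Hr Hr2]]. nra.
  destruct (Req_dec r a0) as [Eq|Ne]. { rewrite <- Eq. auto. }
  exfalso. assert (a0 < r) by (pose proof (Lb r Hr); lra).
  destruct (Cl (r - a0)) as [r' [Hr' Hr'2]]. lra.
  pose proof (Lb r' Hr').
  destruct Hr as [R1 R2]. destruct Hr' as [R1' R2'].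
  assert (Aset (r / r')).
  { split. apply (Rmult_lt_reg_r r'). lra. unfold Rdiv. rewrite Rmult_assoc, Rinv_l; lra.
    apply G'_dg_div; auto; lra. }
  pose proof (Hlow _ H1).
  assert (r / r' <= r / a0).
  { unfold Rdiv. apply Rmult_le_compat_l. lra. apply Rinv_le_contravar; lra. }
  assert (r / a0 < 1 + eta).
  { apply (Rmult_lt_reg_r a0). lra. unfold Rdiv. rewrite Rmult_assoc, Rinv_l; lra. }
  lra.
Qed.

Section Pow.
Variable a0 : R.
Hypothesis Ha0 : Aset a0.
Hypothesis Hmin : forall r, Aset r -> a0 <= r.

Lemma pow_ind (N : nat) : forall r, 1 <= r < a0 ^ N -> G' (dg r) -> exists n, r = a0 ^ n.
Proof.
  destruct Ha0 as [A1 A2].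
  induction N; intros r [R1 R2] HG.
  - simpl in R2. lra.
  - destruct (Rlt_or_le r a0).
    + exists 0%nat. simpl. destruct (Req_dec r 1); auto. exfalso.
      assert (Aset r) by (split; auto; lra). pose proof (Hmin r H1). lra.
    + destruct (IHN (r / a0)) as [n Hn].
      * split. apply (Rmult_le_reg_r a0). lra. unfold Rdiv. rewrite Rmult_assoc, Rinv_l; lra.
        apply (Rmult_lt_reg_r a0). lra. unfold Rdiv. rewrite Rmult_assoc, Rinv_l by lra.
        simpl in R2. lra.
      * apply G'_dg_div; auto; lra.
      * exists (S n). simpl. rewrite <- Hn. field. lra.
Qed.

Lemma pow_all r : 0 < r -> G' (dg r) -> exists n, r = a0 ^ n \/ r = / a0 ^ n.
Proof.
  destruct Ha0 as [A1 A2]. intros Hr HG.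
  assert (Big : forall x, exists N, x < a0 ^ N).
  { intros x. destruct (nat_large (x / (a0 - 1))) as [N HN]. exists N.
    pose proof (bernoulli (a0 - 1) N ltac:(lra)). replace (1 + (a0 - 1)) with a0 in H by ring.
    apply div_lt_mul in HN; lra. }
  destruct (Rle_or_lt 1 r).
  - destruct (Big r) as [N HN]. destruct (pow_ind N r) as [n Hn]; auto. exists n; auto.
  - assert (1 < / r) by (rewrite <- Rinv_1; apply Rinv_lt_contravar; lra).
    destruct (Big (/ r)) as [N HN]. destruct (pow_ind N (/ r)) as [n Hn]; auto. lra.
    apply G'_dg_inv; auto; lra.
    exists n. right. rewrite <- Hn. field. lra.
Qed.

Definition lam := a0 ^ 2.
Lemma sqrt_lam : sqrt lam = a0.
Proof. unfold lam. destruct Ha0. apply sqrt_pow2. lra. Qed.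

Lemma gen_neg X : gen_SD lam X -> gen_SD lam (mneg X).
Proof. intros. rewrite neg_as_mul. apply gen_mul; auto. apply gen_negid. Qed.

Lemma gen_dgpow n : gen_SD lam (dg (a0 ^ n)).
Proof. destruct Ha0.
  induction n.
  - simpl. replace (dg 1) with Id2 by (unfold dg, Id2; apply mat_eq; cbn; field). apply gen_id.
  - simpl. rewrite <- dg_mul by (try apply pow_nonzero; lra). apply gen_mul; auto.
    replace (dg a0) with (Mat (sqrt lam) 0 0 (/ sqrt lam)) by (rewrite sqrt_lam; reflexivity). apply gen_D.
Qed.

Lemma gen_diag X : G' X -> mb X = 0 -> mc X = 0 -> gen_SD lam X.
Proof.
  intros HX Hb Hc0. pose proof (G'_det X HX) as Hd.
  destruct X as [a b c d]; unfold det in Hd; cbn in *. subst b c.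
  assert (Ha : a <> 0) by (intro; subst; lra).
  assert (Hdd : d = / a) by (field_simplify_eq; [lra|auto]). subst d.
  change (G' (dg a)) in HX. change (gen_SD lam (dg a)).
  pose proof (G'_dg_abs a Ha HX) as HX'.
  assert (Habs : 0 < Rabs a) by (apply Rabs_pos_lt; auto).
  assert (GA : gen_SD lam (dg (Rabs a))).
  { destruct (pow_all (Rabs a) Habs HX') as [n [E|E]]; rewrite E. apply gen_dgpow.
    rewrite <- dg_inv by (apply pow_nonzero; destruct Ha0; lra). apply gen_inv. apply gen_dgpow. }
  unfold Rabs in GA. destruct (Rcase_abs a); auto.
  replace (dg a) with (mneg (dg (- a))) by (rewrite dg_neg by lra; rewrite Ropp_involutive; auto).
  apply gen_neg; auto.
Qed.

Lemma gen_back X : gen_SD lam X -> G' X.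
Proof.
  induction 1.
  - apply G'_Id.
  - replace negId2 with (mneg Id2) by (unfold Id2, negId2, Defs.neg; apply mat_eq; cbn; ring).
    apply G'_neg, G'_Id.
  - apply G'_S.
  - rewrite sqrt_lam. destruct Ha0; auto.
  - apply G'_mul; auto.
  - apply G'_inv; auto.
Qed.

Lemma gen_fwd m : G m -> gen_SD lam (conj hh m).
Proof.
  intros Hm. pose proof (proj2 (G'_conj m) Hm) as HX.
  destruct (shape m Hm) as [[B C]|[A D]].
  - apply gen_diag; auto.
  - set (X := conj hh m) in *.
    assert (HY : G' (mul X (inv Smat))) by (apply G'_mul; auto; apply G'_inv, G'_S).
    assert (gen_SD lam (mul X (inv Smat))).
    { apply gen_diag; auto; destruct X; cbn in *; subst; unfold mul, inv, Smat; cbn; ring. }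
    replace X with (mul (mul X (inv Smat)) Smat).
    apply gen_mul; auto. apply gen_S.
    rewrite mul_assoc, mul_inv_l, mul_Id_r; auto. unfold det, Smat; cbn; ring.
Qed.

End Pow.

Theorem dihedral : exists lam, 1 < lam /\ conjugate G (gen_SD lam).
Proof.
  destruct A_min as [a0 [Ha0 Hmin]].
  exists (lam a0). split.
  { unfold lam. destruct Ha0. nra. }
  exists hh. split. apply det_hh.
  intros m. split.
  - intros Hm. apply gen_fwd; auto.
  - intros H. apply G'_conj. apply (gen_back a0); auto.
Qed.

End Dih.


Lemma in_W_of (g : mat) (x : R) : mc g <> 0 -> (mc g * x + md g)^2 < 1 -> in_W g x.
Proof.
  intros Hc H. unfold in_W. set (c := mc g) in *. set (d := md g) in *.
  assert (-1 < c * x + d < 1) by nra.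
  unfold Rabs. destruct (Rcase_abs c) as [L|L].
  - assert (c < 0) by lra. set (ic := / c).
    assert (Hi : c * ic = 1) by (unfold ic; field; auto).
    assert (ic < 0) by (unfold ic; apply Rinv_lt_0_compat; auto).
    assert (E : x = (c*x+d) * ic - d * ic) by (replace x with (x * (c * ic)) at 1 by (rewrite Hi; ring); ring).
    unfold Rdiv. fold ic. replace (/ - c) with (- ic) by (unfold ic; field; auto).
    set (w := c*x+d) in *. rewrite E. split; nra.
  - assert (0 < c) by (destruct L; auto; contradiction). set (ic := / c).
    assert (Hi : c * ic = 1) by (unfold ic; field; auto).
    assert (0 < ic) by (unfold ic; apply Rinv_0_lt_compat; auto).
    assert (E : x = (c*x+d) * ic - d * ic) by (replace x with (x * (c * ic)) at 1 by (rewrite Hi; ring); ring).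
    unfold Rdiv. fold ic.
    set (w := c*x+d) in *. rewrite E. split; nra.
Qed.

Lemma two_roots (t p q : R) : p * (t - p) = 1 -> q * (t - q) = 1 -> 1 <= p^2 -> 1 <= q^2 -> p = q.
Proof.
  intros Hp Hq Hp2 Hq2.
  assert (H : (p - q) * (p + q - t) = 0) by nra.
  apply Rmult_integral in H. destruct H as [H|H]; [lra|].
  assert (Hpq : p * q = 1) by (replace q with (t - p) by lra; auto).
  assert (H2 : p^2 * q^2 = 1) by (replace (p^2*q^2) with ((p*q)^2) by ring; rewrite Hpq; ring).
  assert (p^2 = 1) by nra. assert (q^2 = 1) by nra.
  assert ((p - q)^2 = 0) by (replace ((p-q)^2) with (p^2 + q^2 - 2*(p*q)) by ring; rewrite Hpq; lra).
  nra.
Qed.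

Theorem lemma2p2 (G : mat -> Prop) :
  Fuchsian G ->
  geometrically_finite G ->
  ~ in_Rst G None ->
  ~ (exists lam, 1 < lam /\ conjugate G (gen_SD lam)) ->
  (exists x y : Rhat, x <> y /\ limit_point G x /\ limit_point G y) ->
  forall g, G g -> mc g <> 0 ->
    exists x : R, in_W g x /\ limit_point G (Some x).
Proof.
  intros HF _ _ Hnot Hxy g Hg Hc.
  destruct HF as [Gdet [GId [Gmul [Ginv [Gneg Gdisc]]]]].
  destruct (classic (limit_point G None)) as [Hinf|Hinf].
  { exists (- md g / mc g). split.
    - apply in_W_of; auto. replace (mc g * (- md g / mc g) + md g) with 0 by (field; auto). lra.
    - apply lp_center; auto. }
  apply NNPP. intro Hno.
  assert (HPout : forall r, limit_point G (Some r) -> 1 <= (mc g * r + md g)^2).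
  { intros r Hr. destruct (Rlt_or_le ((mc g * r + md g)^2) 1); auto. exfalso. apply Hno.
    exists r. split; auto. apply in_W_of; auto. }
  assert (Hden : forall h r, G h -> limit_point G (Some r) -> mc h * r + md h <> 0).
  { intros h r Hh Hr E. apply Hinf. eapply lp_inf; eauto. }
  assert (HPf : forall r, limit_point G (Some r) -> limit_point G (Some (mob g r))).
  { intros r Hr. apply lp_fin; auto. }
  assert (HPb : forall r, limit_point G (Some r) -> limit_point G (Some (mob (inv g) r))).
  { intros r Hr. apply lp_fin; auto. }
  assert (HPb0 : forall r, limit_point G (Some r) -> ma g - mc g * r <> 0).
  { intros r Hr. pose proof (Hden (inv g) r (Ginv g Hg) Hr). destruct g; cbn in *. intro. apply H. lra. }
  pose proof (Gdet g Hg) as Hdg.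
  destruct Hxy as [[x0|] [[y0|] [Hne [Hx Hy]]]]; try contradiction.
  assert (Hne' : x0 <> y0) by (intro; subst; auto).
  destruct (Rlt_or_le ((ma g + md g)^2) 4) as [Ht|Ht].
  - destruct (orbit_ell g Hdg _ HPout HPf HPb HPb0 x0 Hx Ht) as [Ex Htr].
    assert (Hall : forall r, limit_point G (Some r) -> r = (ma g - 1) / mc g \/ r = (ma g + 1) / mc g).
    { intros r Hr. destruct (orbit_ell g Hdg _ HPout HPf HPb HPb0 r Hr Ht) as [Er _].
      assert (md g = - ma g) by lra.
      assert ((mc g * r + md g - 1) * (mc g * r + md g + 1) = 0) by nra.
      apply Rmult_integral in H0. destruct H0; [right|left]; field_simplify_eq; auto; lra. }
    assert (Both : forall P Q, (forall r, limit_point G (Some r) -> r = P \/ r = Q) -> P <> Q ->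
              limit_point G (Some P) /\ limit_point G (Some Q)).
    { intros P Q HPQ HnePQ. destruct (HPQ x0 Hx) as [A|A]; destruct (HPQ y0 Hy) as [B|B]; subst;
        try contradiction; split; auto. }
    apply Hnot.
    destruct (Rlt_or_le 0 (mc g)) as [Cp|Cn].
    + assert (Hpq : pp g <> qq g) by (apply pq_ne; auto).
      destruct (Both (pp g) (qq g)) as [Lp Lq]; auto.
      apply (dihedral G Gdet GId Gmul Ginv Gneg Gdisc g); auto.
    + set (g0 := mneg g).
      assert (Hg0 : G g0) by (apply Gneg; auto).
      assert (Cp : 0 < mc g0) by (unfold g0; destruct g; cbn in *; destruct Cn; [lra|contradiction]).
      assert (Tr0 : ma g0 + md g0 = 0) by (unfold g0; destruct g; cbn in *; lra).
      assert (E1 : pp g0 = (ma g + 1) / mc g) by (unfold pp, g0; destruct g; cbn in *; field; auto).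
      assert (E2 : qq g0 = (ma g - 1) / mc g) by (unfold qq, g0; destruct g; cbn in *; field; auto).
      assert (Hpq : pp g0 <> qq g0) by (apply pq_ne; auto).
      assert (HL0 : forall r, limit_point G (Some r) -> r = pp g0 \/ r = qq g0).
      { intros r Hr. rewrite E1, E2. destruct (Hall r Hr); auto. }
      destruct (Both (pp g0) (qq g0)) as [Lp Lq]; auto.
      apply (dihedral G Gdet GId Gmul Ginv Gneg Gdisc g0); auto.
  - pose proof (orbit_hyp g Hdg _ HPout HPf HPb HPb0 x0 Hx Ht) as Ex.
    pose proof (orbit_hyp g Hdg _ HPout HPf HPb HPb0 y0 Hy Ht) as Ey.
    pose proof (HPout x0 Hx). pose proof (HPout y0 Hy).
    assert (E : mc g * x0 + md g = mc g * y0 + md g).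
    { apply (two_roots (ma g + md g)).
      - replace (ma g + md g - (mc g * x0 + md g)) with (ma g - mc g * x0) by ring. auto.
      - replace (ma g + md g - (mc g * y0 + md g)) with (ma g - mc g * y0) by ring. auto.
      - auto. - auto. }
    apply Hne'. apply (Rmult_eq_reg_l (mc g)); auto. lra.
Qed.
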